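(* Let $(X,\rho)$ be a finite metric space, $W\subseteq X$, $T\subseteq X$ nonempty, $z>0$, and let $\mathcal{B}=(\mathcal{B}(1),\ldots,\mathcal{B}(L))$ be a $z$-linear bin division of $W$ with respect to $T$. Let $A\subseteq W$ and $r\in(0,1)$. If $|\mathcal{B}(i)\cap A|/|\mathcal{B}(i)|\le r$ for all $i\in[L]$, then $$R(A\setminus\mathcal{B}(1),T)\le \tfrac32\, r\, R(W,T).$$
   Context: $\rho(x,T):=\min_{y\in T}\rho(x,y)$ and $R(S,T):=\sum_{x\in S}\rho(x,T)$. A $z$-linear bin division of $W$ with respect to $T$ is a partition $\mathcal{B}=(\mathcal{B}(1),\ldots,\mathcal{B}(L))$ of $W$ such that: (1) if $z\le |W|$ then $|\mathcal{B}(i)|\ge z(i+1)/2$ for all $i\in[L]$; otherwise ($|W|<z$) the division is trivial, $\mathcal{B}(1):=W$; (2) $|\mathcal{B}(1)|\le\frac52 z$; (3) $|\mathcal{B}(i+1)|/|\mathcal{B}(i)|\le 3/2$ for $i\in[L-1]$; (4) for $i\in[L-1]$, $x\in\mathcal{B}(i)$, $x'\in\mathcal{B}(i+1)$: $\rho(x,T)\ge\rho(x',T)$. *)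

(* Defs.v *)
From mathcomp Require Import all_boot all_order all_algebra.
Set Implicit Arguments. Unset Strict Implicit. Unset Printing Implicit Defensive.
Import Order.TTheory GRing.Theory Num.Theory.
Local Open Scope ring_scope.

Definition is_metric (R : realFieldType) (X : finType) (rho : X -> X -> R) : Prop :=
  [/\ forall x y, 0 <= rho x y,
      forall x y, (rho x y == 0) = (x == y),
      forall x y, rho x y = rho y x &
      forall x y w, rho x w <= rho x y + rho y w].

(* rho(x, T) := min_{y in T} rho(x, y)   (meaningful for T nonempty; 0 if T = set0) *)
Definition dist_set (R : realFieldType) (X : finType) (rho : X -> X -> R)
  (x : X) (T : {set X}) : R :=
  match [pick y in T] with
  | Some y0 => \big[Num.min/rho x y0]_(y in T) rho x y
  | None => 0
  end.

Definition cost (R : realFieldType) (X : finType) (rho : X -> X -> R)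
  (S T : {set X}) : R :=
  \sum_(x in S) dist_set rho x T.

(* B = (B(1), ..., B(L)) is represented by a list B of length L, with
   B(i) = nth set0 B (i-1).  It is an ordered partition of W:
   L >= 1, bins are pairwise disjoint, and their union is W. *)
Definition ordered_partition (X : finType) (B : seq {set X}) (W : {set X}) : Prop :=
  [/\ (0 < size B)%N,
      (\bigcup_(k < size B) nth set0 B k) = W &
      forall k l, (k < size B)%N -> (l < size B)%N -> k <> l ->
        [disjoint nth set0 B k & nth set0 B l]].

(* z-linear bin division of W with respect to T (0-based index k = i - 1). *)
Definition linear_bin_division (R : realFieldType) (X : finType)
  (rho : X -> X -> R) (z : R) (W T : {set X}) (B : seq {set X}) : Prop :=
  [/\ ordered_partition B W,
      (if z <= #|W|%:R then
         forall k, (k < size B)%N -> z * (k.+2)%:R / 2%:R <= #|nth set0 B k|%:R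
       else B = [:: W]),
      (#|nth set0 B 0|%:R : R) <= 5 / 2 * z,
      (forall k, (k.+1 < size B)%N ->
         (#|nth set0 B k.+1|%:R : R) / #|nth set0 B k|%:R <= 3 / 2) &
      (forall k, (k.+1 < size B)%N -> forall x x',
         x \in nth set0 B k -> x' \in nth set0 B k.+1 ->
         dist_set rho x' T <= dist_set rho x T)].

(* Main.v *)
Require Import Defs.
From mathcomp Require Import all_boot all_order all_algebra.
From mathcomp Require Import ring.
Import Order.TTheory GRing.Theory Num.Theory.
Local Open Scope ring_scope.

Lemma dist_set_ge0 (R : realFieldType) (X : finType) (rho : X -> X -> R) x T :
  is_metric rho -> 0 <= dist_set rho x T.
Proof.
case=> h0 _ _ _; rewrite /dist_set; case: pickP => [y0 _|//].
apply: (big_ind (fun v => 0 <= v)) => //.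
by move=> a b ha hb; rewrite le_min ha hb.
Qed.

Lemma cost_ge0 (R : realFieldType) (X : finType) (rho : X -> X -> R) S T :
  is_metric rho -> 0 <= cost rho S T.
Proof. by move=> hm; apply: sumr_ge0 => x _; exact: dist_set_ge0. Qed.

Theorem lemma6 (R : realFieldType) (X : finType) (rho : X -> X -> R)
  (W T : {set X}) (z : R) (B : seq {set X}) (A : {set X}) (r : R) :
  is_metric rho ->
  T != set0 ->
  0 < z ->
  linear_bin_division rho z W T B ->
  A \subset W ->
  0 < r < 1 ->
  (forall k, (k < size B)%N ->
     (#|nth set0 B k :&: A|%:R : R) / #|nth set0 B k|%:R <= r) ->
  cost rho (A :\: nth set0 B 0) T <= 3 / 2 * r * cost rho W T.
Proof.
move=> hm _ z0 [[L0 hW hdis] h1 _ h3 h4] AW /andP[r0 _] hr.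
have cW := @cost_ge0 _ _ rho W T hm.
case: ifP h1 => hz h1; last first.
  subst B => /=.
  have -> : A :\: W = set0 by apply/eqP; rewrite setD_eq0.
  rewrite /cost big_set0; apply: mulr_ge0 => //; apply: mulr_ge0; last exact: ltW.
  by apply: divr_ge0.
set L := size B in L0 hW hdis h3 h4 hr h1.
pose Bk k := nth set0 B k.
have Bpos : forall k, (k < L)%N -> (0 : R) < #|Bk k|%:R.
  move=> k hk; apply: lt_le_trans (h1 k hk).
  by apply: divr_gt0 => //; apply: mulr_gt0.
have key : forall k, (k.+1 < L)%N ->
    cost rho ((A :\: Bk 0) :&: Bk k.+1) T <= 3 / 2 * r * cost rho (Bk k) T.
  move=> k hk.
  set S := (A :\: Bk 0) :&: Bk k.+1.
  have hp := Bpos k (ltnW hk).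
  have hq := Bpos _ hk.
  have c1 : cost rho S T * #|Bk k|%:R <= cost rho (Bk k) T * #|S|%:R.
    rewrite !mulr_natr -(sumr_const (mem (Bk k)) (cost rho S T)).
    rewrite -(sumr_const (mem S) (cost rho (Bk k) T)) /cost exchange_big /=.
    apply: ler_sum => x xS; apply: ler_sum => y yB.
    apply: (h4 k hk) => //; by move: xS; rewrite /S in_setI => /andP[].
  have c2 : (#|S|%:R : R) <= r * #|Bk k.+1|%:R.
    apply: le_trans (_ : (#|Bk k.+1 :&: A|%:R : R) <= _).
      rewrite ler_nat; apply: subset_leq_card; apply/subsetP => x.
      by rewrite /S !inE => /andP[/andP[_ ->] ->].
    by rewrite -ler_pdivrMr // hr.
  have c3 : (#|Bk k.+1|%:R : R) <= 3 / 2 * #|Bk k|%:R.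
    by rewrite -ler_pdivrMr // h3.
  have cB := @cost_ge0 _ _ rho (Bk k) T hm.
  rewrite -(ler_pM2r hp); apply: (le_trans c1).
  apply: le_trans (ler_wpM2l cB c2) _.
  have -> : 3 / 2 * r * cost rho (Bk k) T * #|Bk k|%:R =
            cost rho (Bk k) T * (r * (3 / 2 * #|Bk k|%:R)) by ring.
  apply: ler_wpM2l => //; apply: ler_wpM2l => //; exact: ltW.
have eqS : A :\: Bk 0 = \bigcup_(k < L) ((A :\: Bk 0) :&: Bk k).
  apply/setP => x; apply/idP/bigcupP.
    move=> xA; have : x \in W by apply: (subsetP AW); move: xA; rewrite inE => /andP[_].
    rewrite -hW => /bigcupP[k _ xk]; exists k => //; by rewrite inE xA.
  by case=> k _; rewrite inE => /andP[].
have disjS : forall i j : 'I_L, i != j ->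
    [disjoint (A :\: Bk 0) :&: Bk i & (A :\: Bk 0) :&: Bk j].
  move=> i j ij; apply: (disjointW (subsetIr _ _) (subsetIr _ _)).
  by apply: hdis => // /val_inj; apply/eqP.
have disjB : forall i j : 'I_L, i != j -> [disjoint Bk i & Bk j].
  by move=> i j ij; apply: hdis => // /val_inj; apply/eqP.
rewrite /cost eqS (partition_disjoint_bigcup _ _ disjS).
rewrite -hW (partition_disjoint_bigcup _ _ disjB).
move: L0 key; clearbody L; clear -hm r0; case: L => [//|n] _ key.
rewrite big_ord_recl /=.
have -> : (A :\: Bk 0) :&: Bk 0 = set0.
  by apply/setP => x; rewrite !inE; case: (x \in Bk 0); rewrite ?andbF.
rewrite big_set0 add0r big_ord_recr /= mulrDr mulr_sumr.
apply: le_trans (_ : \sum_(i < n) 3 / 2 * r * cost rho (Bk i) T <= _).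
  by apply: ler_sum => i _; apply: (key i); rewrite ltnS.
rewrite lerDl; apply: mulr_ge0; last exact: cost_ge0.
by apply: mulr_ge0; [apply: divr_ge0 | apply: ltW].
Qed.
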